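(* Let $G$ be a graph containing no cycle of length 6, let $x\in V(G)$, and let $A$ be a bipartite connected component of $G[N_2(x)]$ with vertex sets of bipartition $V_1$ and $V_2$ such that $\min(|V_1|,|V_2|)\ge 2$. Then $|N(x)\cap N(V(A))|=1$.
   Context: All graphs are finite, simple and undirected; ''containing no cycle of length 6'' means having no subgraph (not necessarily induced) isomorphic to $C_6$. $N_i(S)$ denotes the set of vertices at distance exactly $i$ from the vertex set $S$, $N(S)=N_1(S)$, $N(v)=N(\{v\})$, $N_2(v)=N_2(\{v\})$. *)

(* Defs.v *)
(* A simple graph is a symmetric irreflexive relation
   e : rel T on a finite type T. *)
From mathcomp Require Import all_boot.
Set Implicit Arguments.
Unset Strict Implicit.
Unset Printing Implicit Defensive.

Section Graph.
Variable T : finType.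
Variable e : rel T.

Definition no_C6 : Prop :=
  forall v0 v1 v2 v3 v4 v5 : T,
    uniq [:: v0; v1; v2; v3; v4; v5] ->
    ~~ [&& e v0 v1, e v1 v2, e v2 v3, e v3 v4, e v4 v5 & e v5 v0].

Definition NS (S : {set T}) : {set T} :=
  [set v | (v \notin S) && [exists u in S, e u v]].

Definition N1 (x : T) : {set T} := NS [set x].

Definition N2 (x : T) : {set T} :=
  [set v | [&& v != x, ~~ e x v & [exists u, e x u && e u v]]].

Definition induced (S : {set T}) : rel T :=
  [rel u v | [&& e u v, u \in S & v \in S]].

Definition is_component (S C : {set T}) : Prop :=
  exists2 u, u \in S & C = [set v in S | connect (induced S) u v].

Definition bipartition (C V1 V2 : {set T}) : Prop :=
  [/\ V1 :|: V2 = C, [disjoint V1 & V2],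
      {in V1 &, forall u v, ~~ e u v} & {in V2 &, forall u v, ~~ e u v}].

End Graph.

(* Main.v *)
Require Import Defs.
From mathcomp Require Import all_boot.

Ltac neq_tac irr :=
  apply/negP => /eqP E; subst;
  match goal with
  | H : is_true (?v != ?v) |- _ => by rewrite eqxx in H
  | H : is_true (_ ?v ?v) |- _ => by rewrite irr in H
  | H : is_true (?f ?u ?v), H' : is_true (~~ ?f ?u ?v) |- _ => by rewrite H in H'
  end.

Ltac uniq_tac irr :=
  rewrite /= !inE !negb_or; repeat (apply/andP; split); try done; neq_tac irr.

Theorem lemma2p5 (T : finType) (e : rel T)
  (e_sym : symmetric e) (e_irr : irreflexive e)
  (noC6 : no_C6 e) (x : T) (A V1 V2 : {set T})
  (hA : is_component e (N2 e x) A)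
  (hbip : bipartition e A V1 V2)
  (h1 : 2 <= #|V1|) (h2 : 2 <= #|V2|) :
  #|N1 e x :&: NS e A| = 1.
Proof.
set S := N2 e x.
have indE : forall u v, induced e S u v = [&& e u v, u \in S & v \in S] by [].
have C6 : forall v0 v1 v2 v3 v4 v5, uniq [:: v0; v1; v2; v3; v4; v5] ->
    e v0 v1 -> e v1 v2 -> e v2 v3 -> e v3 v4 -> e v4 v5 -> e v5 v0 -> False.
  move=> v0 v1 v2 v3 v4 v5 U h01 h12 h23 h34 h45 h50.
  by move: (noC6 _ _ _ _ _ _ U); rewrite h01 h12 h23 h34 h45 h50.
have N2P : forall v, v \in S -> (v != x) /\ ~~ e x v.
  by move=> v; rewrite inE => /and3P [].
have N2nb : forall v, v \in S -> exists r, e x r && e r v.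
  by move=> v; rewrite inE => /and3P [_ _ /existsP].
have L : forall s r a c p, e x s -> e x r -> s != r -> a \in S -> c \in S ->
    p \in S -> e s a -> e r c -> e a p -> e p c -> c != a -> False.
  move=> s r a c p hs hr sr ha hc hp hsa hrc hap hpc ca.
  have [ax nxa] := N2P a ha; have [cx nxc] := N2P c hc; have [px nxp] := N2P p hp.
  have hcr : e c r by rewrite e_sym.
  have hrx : e r x by rewrite e_sym.
  apply: (C6 x s a p c r) => //; uniq_tac e_irr.
case: hA => u0 hu0 Adef.
have inA : forall v, (v \in A) = (v \in S) && connect (induced e S) u0 v.
  by move=> v; rewrite Adef inE.
have AS : forall v, v \in A -> v \in S by move=> v; rewrite inA => /andP [].
have isym : symmetric (induced e S).
  by move=> u v; rewrite !indE (e_sym u v); case: (e v u); case: (u \in S); case: (v \in S).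
have csym := sym_connect_sym isym.
have cl : forall u v, u \in A -> induced e S u v -> v \in A.
  move=> u v; rewrite !inA => /andP [_ cu] h.
  have := h; rewrite indE => /and3P [_ _ ->] /=.
  exact: (connect_trans cu (connect1 h)).
case: hbip => UA D0 I1 I2.
have side : forall v, v \in A -> (v \in V1) || (v \in V2).
  by move=> v; rewrite -UA inE.
have nboth : forall v, v \in V1 -> v \in V2 -> False.
  move=> v a1 a2; have : v \in V1 :&: V2 by rewrite inE a1 a2.
  by rewrite (disjoint_setI0 D0) inE.
have flip : forall u v, u \in A -> v \in A -> e u v -> (u \in V1) = ~~ (v \in V1).
  move=> u v uA vA euv.
  case: (boolP (u \in V1)) => u1; case: (boolP (v \in V1)) => v1 //=.
    by move: (I1 u v u1 v1); rewrite euv.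
  have u2 : u \in V2 by move: (side u uA); rewrite (negbTE u1).
  have v2 : v \in V2 by move: (side v vA); rewrite (negbTE v1).
  by move: (I2 u v u2 v2); rewrite euv.
have NT : forall a b c, a \in A -> b \in A -> c \in A -> e a b -> e b c -> e a c -> False.
  move=> a b c aA bA cA eab ebc eac.
  move: (flip a b aA bA eab) (flip b c bA cA ebc) (flip a c aA cA eac).
  by case: (a \in V1); case: (b \in V1); case: (c \in V1).
have E2 : forall W : {set T}, W \subset A -> 2 <= #|W| -> {in W &, forall u v, ~~ e u v} ->
    forall a, a \in W -> exists p c, [/\ p \in A, c \in A, e a p, e p c & c != a].
  move=> W sWA cW iW a aW.
  have : 0 < #|W :\ a| by move: cW; rewrite (cardsD1 a W) aW.
  case/card_gt0P => a'; rewrite !inE => /andP [a'a a'W].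
  have aA := subsetP sWA a aW; have a'A := subsetP sWA a' a'W.
  have conn : connect (induced e S) a a'.
    move: aA a'A; rewrite !inA => /andP [_ c1] /andP [_ c2].
    by apply: (connect_trans _ c2); rewrite csym.
  case/connectP: conn => p0 pth lst.
  case: (shortenP pth) lst => p1 pth1 U1 _ lst1.
  case: p1 pth1 U1 lst1 => [|v1 [|v2 p2]] /=.
  - by move=> _ _ E; rewrite E eqxx in a'a.
  - rewrite andbT indE => /and3P [eav1 _ _] _ E; subst.
    by move: (iW a v1 aW a'W); rewrite eav1.
  - move=> /andP [h01 /andP [h12 _]] U1 _.
    have v1A := cl a v1 aA h01; have v2A := cl v1 v2 v1A h12.
    exists v1, v2; split => //.
      by move: h01; rewrite indE => /and3P [].
      by move: h12; rewrite indE => /and3P [].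
    move: U1; rewrite !inE negb_or => /andP [/andP [_ ]].
    by rewrite negb_or => /andP [/negbTE n _] _; rewrite eq_sym n.
have E2A : forall a, a \in A -> exists p c, [/\ p \in A, c \in A, e a p, e p c & c != a].
  move=> a aA; case/orP: (side a aA) => aV.
    apply: (E2 V1) => //; by rewrite -UA subsetUl.
  apply: (E2 V2) => //; by rewrite -UA subsetUr.
have B0 : forall s t a, a \in A -> e x s -> e x t -> s != t -> e s a -> e t a -> False.
  move=> s t a aA hs ht st hsa hta.
  have [p [c [pA cA hap hpc ca]]] := E2A a aA.
  have [r /andP [hr hrc]] := N2nb c (AS c cA).
  case: (eqVneq r s) => [E|rs].
    subst r; apply: (L t s a c p) => //; [by rewrite eq_sym | exact: AS ..].
  by apply: (L s r a c p) => //; [by rewrite eq_sym | exact: AS ..].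
have H : forall s t a b p c, a \in A -> b \in A -> e a b -> e x s -> e x t -> s != t ->
    e s a -> e t b -> p \in A -> c \in A -> e a p -> e p c -> c != a -> p != b -> False.
  move=> s t a b p c aA bA eab hs ht st hsa htb pA cA hap hpc ca pb.
  have [r /andP [hr hrc]] := N2nb c (AS c cA).
  case: (eqVneq r s) => [E|rs]; last first.
    by apply: (L s r a c p) => //; [by rewrite eq_sym | exact: AS ..].
  subst r.
  have [r' /andP [hr' hr'p]] := N2nb p (AS p pA).
  case: (eqVneq r' t) => [E|rt]; last first.
    apply: (L t r' b p a) => //; [by rewrite eq_sym | exact: AS .. | by rewrite e_sym].
  subst r'.
  have cb : c != b.
    apply/negP => /eqP E; subst c; exact: (NT a p b aA pA bA hap hpc eab).
  have [ax nxa] := N2P a (AS a aA); have [bx nxb] := N2P b (AS b bA).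
  have [cx nxc] := N2P c (AS c cA); have [px nxp] := N2P p (AS p pA).
  apply: (C6 s c p t b a) => //; try by rewrite e_sym.
  uniq_tac e_irr.
have EC : forall s t a b, a \in A -> b \in A -> e a b -> e x s -> e x t -> s != t ->
    e s a -> e t b -> False.
  move=> s t a b aA bA eab hs ht st hsa htb.
  have [p [c [pA cA hap hpc ca]]] := E2A a aA.
  case: (eqVneq p b) => [E|pb]; last exact: (H s t a b p c).
  subst p.
  have [q [d [qA dA hbq hqd db]]] := E2A b bA.
  case: (eqVneq q a) => [E|qa]; last first.
    apply: (H t s b a q d) => //; [by rewrite e_sym | by rewrite eq_sym].
  subst q.
  have [r /andP [hr hrc]] := N2nb c (AS c cA).
  case: (eqVneq r s) => [E|rs]; last first.
    by apply: (L s r a c b) => //; [by rewrite eq_sym | exact: AS ..].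
  subst r.
  have [r' /andP [hr' hr'd]] := N2nb d (AS d dA).
  case: (eqVneq r' t) => [E|rt]; last first.
    apply: (L t r' b d a) => //; [by rewrite eq_sym | exact: AS ..].
  subst r'.
  have cd : c != d.
    apply/negP => /eqP E; subst d; exact: (NT a b c aA bA cA eab hpc hqd).
  have [ax nxa] := N2P a (AS a aA); have [bx nxb] := N2P b (AS b bA).
  have [cx nxc] := N2P c (AS c cA); have [dx nxd] := N2P d (AS d dA).
  apply: (C6 s c b t d a) => //; try by rewrite e_sym.
  uniq_tac e_irr.
have key : forall n p s t a b, size p <= n -> path (induced e S) a p -> b = last a p ->
    a \in A -> b \in A -> e x s -> e x t -> s != t -> e s a -> e t b -> False.
  elim=> [|n IH] [|v1 [|v2 p]] s t a b //= hsz.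
  - by move=> _ -> aA _; exact: B0.
  - by move=> _ -> aA _; exact: B0.
  - rewrite andbT => h ->; move=> aA bA; apply: EC => //.
    by move: h; rewrite indE => /and3P [].
  - move=> /andP [h01 /andP [h12 pth]] lst aA bA hs ht st hsa htb.
    have v1A := cl a v1 aA h01; have v2A := cl v1 v2 v1A h12.
    case: (eqVneq v2 a) => [E|v2a].
      subst v2; exact: (IH p s t a b (ltnW hsz) pth lst aA bA hs ht st hsa htb).
    have [r /andP [hr hrv]] := N2nb v2 (AS v2 v2A).
    case: (eqVneq r s) => [E|rs].
      subst r; exact: (IH p s t v2 b (ltnW hsz) pth lst v2A bA hs ht st hrv htb).
    apply: (L s r a v2 v1) => //; [by rewrite eq_sym | exact: AS .. | | ].
      by move: h01; rewrite indE => /and3P [].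
    by move: h12; rewrite indE => /and3P [].
have N1P : forall v, (v \in N1 e x) = e x v.
  move=> v; rewrite !inE; apply/idP/idP.
    by case/andP => _ /existsP [u /andP [/set1P -> //]].
  move=> hv; apply/andP; split; last by apply/existsP; exists x; rewrite inE eqxx.
  by apply/negP => /eqP E; move: hv; rewrite E e_irr.
apply/eqP; rewrite eqn_leq; apply/andP; split.
  apply/card_le1_eqP => s t; rewrite !in_setI => /andP [hs1 hsA] /andP [ht1 htA].
  move: hsA htA; rewrite !inE => /andP [_ /existsP [a /andP [aA hsa]]].
  move=> /andP [_ /existsP [b /andP [bA htb]]].
  move: hs1 ht1; rewrite !N1P => hs ht; apply/eqP; apply/negPn/negP => st.
  have : connect (induced e S) a b.
    move: aA bA; rewrite !inA => /andP [_ c1] /andP [_ c2].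
    by apply: (connect_trans _ c2); rewrite csym.
  case/connectP => p pth lst.
  apply: (key (size p) p s t a b (leqnn _) pth lst aA bA hs ht _ _ _); by rewrite 1?eq_sym 1?e_sym.
apply/card_gt0P.
have u0A : u0 \in A by rewrite inA hu0 connect0.
have [r /andP [hr hru]] := N2nb u0 hu0.
exists r; rewrite inE N1P hr /= inE; apply/andP; split.
  apply/negP => rA; have [_ nxr] := N2P r (AS r rA); by rewrite hr in nxr.
by apply/existsP; exists u0; rewrite u0A e_sym.
Qed.
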